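(* Let $G_0$ be the group of homeomorphisms of $\mathbb{R}$ defined in the context. The center of $G_0$ is trivial.
   Context: $G_0$ is the group of homeomorphisms of $\mathbb{R}$ generated by the following maps: - $a(t)=t+1$; - $b$, where $b(t)=t$ for $t\le 0$, $b(t)=t/(1-t)$ for $0\le t\le 1/2$, $b(t)=(3t-1)/t$ for $1/2\le t\le 1$, and $b(t)=t+1$ for $t\ge 1$; - $c$, where $c(t)=2t/(t+1)$ for $0\le t\le 1$ and $c(t)=t$ otherwise. *)

(* Defs.v *)
From Stdlib Require Import Reals.
Open Scope R_scope.

Definition gen_a (t : R) : R := t + 1.

Definition gen_b (t : R) : R :=
  if Rle_dec t 0 then t
  else if Rle_dec t (1/2) then t / (1 - t)
  else if Rle_dec t 1 then (3 * t - 1) / t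
  else t + 1.

Definition gen_c (t : R) : R :=
  if Rle_dec 0 t then (if Rle_dec t 1 then 2 * t / (t + 1) else t) else t.

Inductive G0 : (R -> R) -> Prop :=
| G0_id : G0 (fun t => t)
| G0_a : G0 gen_a
| G0_b : G0 gen_b
| G0_c : G0 gen_c
| G0_comp : forall f g, G0 f -> G0 g -> G0 (fun t => f (g t))
| G0_inv : forall f g, G0 f ->
    (forall t, f (g t) = t) -> (forall t, g (f t) = t) -> G0 g.

(* Main.v *)
Require Import Defs.
From Stdlib Require Import Reals Lra Lia ZArith.
Open Scope R_scope.

Definition SI (f : R -> R) := forall x y, x < y -> f x < f y.

Lemma div_lt a b c d : 0 < b -> 0 < d -> a * d < c * b -> a / b < c / d.
Proof. intros. apply (Rmult_lt_reg_r (b*d)). nra.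
  replace (a/b*(b*d)) with (a*d) by (field; lra).
  replace (c/d*(b*d)) with (c*b) by (field; lra). lra. Qed.

Lemma b_SI : SI gen_b.
Proof. intros x y H. unfold gen_b.
  destruct (Rle_dec x 0); destruct (Rle_dec y 0); try lra;
  destruct (Rle_dec x (1/2)); destruct (Rle_dec y (1/2)); try lra;
  destruct (Rle_dec x 1); destruct (Rle_dec y 1); try lra.
  all: try (replace x with (x/1) at 1 by field; apply div_lt; nra).
  all: try (replace (y+1) with ((y+1)/1) by field; apply div_lt; nra).
  all: try (apply div_lt; nra).
Qed.

Lemma c_SI : SI gen_c.
Proof. intros x y H. unfold gen_c.
  destruct (Rle_dec 0 x); destruct (Rle_dec 0 y); try lra;
  destruct (Rle_dec x 1); destruct (Rle_dec y 1); try lra.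
  all: try (replace x with (x/1) at 1 by field; apply div_lt; nra).
  all: try (replace y with (y/1) at 2 by field; apply div_lt; nra).
  all: try (apply div_lt; nra).
all: replace y with (y/1) by field; apply div_lt; nra.
Qed.

Lemma G0_SI : forall f, G0 f -> SI f.
Proof.
  induction 1; intros x y Hxy.
  - exact Hxy.
  - unfold gen_a; lra.
  - apply b_SI; exact Hxy.
  - apply c_SI; exact Hxy.
  - apply IHG0_1, IHG0_2, Hxy.
  - destruct (Rtotal_order (g y) (g x)) as [Hl|[He|Hg]]; auto.
    + apply IHG0 in Hl. rewrite !H0 in Hl. lra.
    + assert (f (g x) = f (g y)) by (rewrite He; auto). rewrite !H0 in H2. lra.
Qed.

Lemma b_fix y : gen_b y = y -> y <= 0.
Proof. unfold gen_b. destruct (Rle_dec y 0); auto.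
  destruct (Rle_dec y (1/2)); destruct (Rle_dec y 1); intro H; exfalso.
  - assert (y = y*(1-y)) by (rewrite <- H at 2; field; lra). nra.
  - assert (y = y*(1-y)) by (rewrite <- H at 2; field; lra). nra.
  - assert (3*y-1 = y*y) by (rewrite <- H at 2; field; lra). nra.
  - lra.
Qed.

Lemma b_fix1 y : gen_b y = y + 1 -> 1 <= y.
Proof. unfold gen_b. destruct (Rle_dec y 0); [lra|].
  destruct (Rle_dec y (1/2)); destruct (Rle_dec y 1); intro H; try lra.
  - assert (y = (y+1)*(1-y)) by (rewrite <- H; field; lra). nra.
  - assert (3*y-1 = (y+1)*y) by (rewrite <- H; field; lra). nra.
Qed.

Section Main.
Variable g : R -> R.
Hypothesis gSI : SI g.
Hypothesis ga : forall t, g (t + 1) = g t + 1.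
Hypothesis gb : forall t, g (gen_b t) = gen_b (g t).
Hypothesis gc : forall t, g (gen_c t) = gen_c (g t).

Definition P y := g y = y.

Lemma g0 : P 0.
Proof.
  assert (H0 : g 0 <= 0). { apply b_fix. rewrite <- gb. unfold gen_b.
    destruct (Rle_dec 0 0); [auto|lra]. }
  assert (H1 : 1 <= g 1). { apply b_fix1. rewrite <- gb.
    replace (gen_b 1) with (1+1). apply ga.
    unfold gen_b. destruct (Rle_dec 1 0); try lra.
    destruct (Rle_dec 1 (1/2)); try lra. destruct (Rle_dec 1 1); try lra. }
  replace 1 with (0+1) in H1 by lra. rewrite ga in H1. unfold P; lra.
Qed.

Lemma Pp t : P t -> P (t+1).
Proof. unfold P; intro; rewrite ga; lra. Qed.
Lemma Pm t : P t -> P (t-1).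
Proof. unfold P; intro H. pose proof (ga (t-1)). replace (t-1+1) with t in H0 by lra. lra. Qed.

Lemma Pc t : P t -> P (gen_c t).
Proof. unfold P; intro H. rewrite gc, H; auto. Qed.
Lemma Pb t : P (gen_b t) -> P t.
Proof. unfold P; intro H. rewrite gb in H.
  destruct (Rtotal_order (g t) t) as [Hl|[He|Hg]]; auto;
  [apply b_SI in Hl | apply b_SI in Hg]; lra. Qed.

Lemma Pnat n : P (INR n).
Proof. induction n. apply g0. rewrite S_INR. apply Pp; auto. Qed.

Lemma Pinv m : P (1 / (INR m + 1)).
Proof. induction m.
  - simpl. replace (1/(0+1)) with (0+1) by field. apply Pp, g0.
  - apply Pb. rewrite S_INR. pose proof (pos_INR m).
    replace (gen_b (1/(INR m + 1 + 1))) with (1/(INR m + 1)); auto.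
    unfold gen_b. destruct (Rle_dec (1 / (INR m + 1 + 1)) 0).
    { exfalso. assert (0 < 1/(INR m+1+1)) by (apply Rdiv_lt_0_compat; lra). lra. }
    destruct (Rle_dec (1 / (INR m + 1 + 1)) (1/2)). field; lra.
    exfalso. apply n0. apply Rmult_le_reg_r with (2*(INR m + 1 + 1)). lra.
    replace (1 / (INR m + 1 + 1) * (2 * (INR m + 1 + 1))) with 2 by (field; lra).
    replace (1/2 * (2 * (INR m + 1 + 1))) with (INR m + 1 + 1) by field. lra.
Qed.

Lemma Pdy k : forall m : nat, (2^k <= m)%nat -> P (INR (2^k) / INR m).
Proof. induction k; intros m Hm.
  - simpl in *. destruct m. lia. rewrite S_INR. apply (Pinv m).
  - set (m' := (m - 2^k)%nat).
    assert (Hm' : (2^k <= m')%nat) by (simpl in Hm; unfold m'; lia).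
    pose proof (IHk m' Hm') as H.
    apply Pc in H.
    assert (E : INR m = INR m' + INR (2^k)) by (rewrite <- plus_INR; f_equal; unfold m'; simpl in Hm; lia).
    assert (Hp : 0 < INR (2^k)) by (apply lt_0_INR; pose proof (Nat.pow_nonzero 2 k); lia).
    assert (Hle : INR (2^k) <= INR m') by (apply le_INR; auto).
    replace (INR (2 ^ S k) / INR m) with (gen_c (INR (2 ^ k) / INR m')); auto.
    unfold gen_c. destruct (Rle_dec 0 (INR (2 ^ k) / INR m')).
    2:{ exfalso; apply n; apply Rlt_le, Rdiv_lt_0_compat; lra. }
    destruct (Rle_dec (INR (2 ^ k) / INR m') 1).
    2:{ exfalso; apply n; apply Rmult_le_reg_r with (INR m'); try lra.
        replace (INR (2 ^ k) / INR m' * INR m') with (INR (2^k)) by (field; lra). lra. }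
    rewrite E. replace (2 ^ S k)%nat with (2 * 2^k)%nat by (simpl; lia).
    rewrite mult_INR. simpl (INR 2). field. lra.
Qed.
End Main.

Lemma lt_pow2 n : (n < 2 ^ n)%nat.
Proof. induction n; simpl; lia. Qed.

Lemma INR_toZ z : (0 <= z)%Z -> INR (Z.to_nat z) = IZR z.
Proof. intro. rewrite INR_IZR_INZ, Z2Nat.id; auto. Qed.

Lemma IZR_nat z : exists n, IZR z = INR n \/ IZR z = - INR n.
Proof. destruct z as [|p|p].
  - exists 0%nat; simpl; auto.
  - exists (Pos.to_nat p). left. rewrite INR_IZR_INZ, positive_nat_Z. auto.
  - exists (Pos.to_nat p). right. rewrite INR_IZR_INZ, positive_nat_Z. simpl. auto.
Qed.

Section Main2.
Variable g : R -> R.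
Hypothesis gSI : SI g.
Hypothesis ga : forall t, g (t + 1) = g t + 1.
Hypothesis gb : forall t, g (gen_b t) = gen_b (g t).
Hypothesis gc : forall t, g (gen_c t) = gen_c (g t).

Lemma dens01 u v : 0 < u -> u < v -> v <= 1 -> exists p, P g p /\ u < p < v.
Proof. intros Hu Huv Hv.
  set (d := 1/u - 1/v).
  assert (Hd : 0 < d). { unfold d. apply Rlt_Rminus.
    apply Rmult_lt_reg_r with (u*v). nra.
    replace (1/v*(u*v)) with u by (field; lra). replace (1/u*(u*v)) with v by (field; lra). lra. }
  destruct (archimed (1/d)) as [A1 _].
  assert (Hz : (0 <= up (1/d))%Z). { apply le_IZR. assert (0 < 1/d) by (apply Rdiv_lt_0_compat; lra). lra. }
  set (k := Z.to_nat (up (1/d))).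
  set (K := INR (2^k)).
  assert (HK : 1/d < K). { unfold K. apply Rlt_trans with (INR k).
    unfold k. rewrite INR_toZ; auto. apply lt_INR. apply lt_pow2. }
  assert (HK0 : 0 < K) by (apply Rlt_trans with (1/d); auto; apply Rdiv_lt_0_compat; lra).
  assert (HKd : 1 < K * d). { apply Rmult_lt_reg_r with (/d). apply Rinv_0_lt_compat; lra.
    replace (K*d*/d) with K by (field; lra). lra. }
  destruct (archimed (K/v)) as [B1 B2].
  assert (HKv : K <= K / v). { apply Rmult_le_reg_r with v. lra.
    replace (K/v*v) with K by (field; lra). nra. }
  assert (Hz2 : (0 <= up (K/v))%Z). { apply le_IZR. lra. }
  set (m := Z.to_nat (up (K/v))).
  assert (Hm : INR m = IZR (up (K/v))) by (unfold m; apply INR_toZ; auto).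
  exists (K / INR m). split.
  - apply Pdy; auto. apply Nat.lt_le_incl, INR_lt. fold K. lra.
  - assert (Hm0 : 0 < INR m) by lra. split.
    + apply Rmult_lt_reg_r with (INR m / u). apply Rdiv_lt_0_compat; lra.
      replace (u * (INR m / u)) with (INR m) by (field; lra).
      replace (K / INR m * (INR m / u)) with (K / u) by (field; lra).
      assert (K/u = K/v + K*d) by (unfold d; field; lra). lra.
    + apply Rmult_lt_reg_r with (INR m / v). apply Rdiv_lt_0_compat; lra.
      replace (v * (INR m / v)) with (INR m) by (field; lra).
      replace (K / INR m * (INR m / v)) with (K / v) by (field; lra). lra.
Qed.

Lemma Pnat_shift n t : P g t -> P g (t + INR n) /\ P g (t - INR n).
Proof. intro H. induction n.
  - simpl INR. split; [replace (t+0) with t by lra | replace (t-0) with t by lra]; auto.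
  - destruct IHn. rewrite S_INR. split.
    + replace (t + (INR n + 1)) with (t + INR n + 1) by lra. apply Pp; auto.
    + replace (t - (INR n + 1)) with (t - INR n - 1) by lra. apply Pm; auto.
Qed.

Lemma Pshift z t : P g t -> P g (t + IZR z).
Proof. intro H. destruct (IZR_nat z) as [n [E|E]]; rewrite E.
  - apply Pnat_shift; auto.
  - replace (t + - INR n) with (t - INR n) by lra. apply Pnat_shift; auto.
Qed.

Lemma dens u v : u < v -> exists p, P g p /\ u < p < v.
Proof. intro H. destruct (archimed u) as [A1 A2]. set (N := IZR (up u)) in *.
  destruct (Rlt_le_dec N v).
  - exists N. split; [|lra]. unfold N. replace (IZR (up u)) with (0 + IZR (up u)) by lra.
    apply Pshift, g0; auto.
  - set (w := Rmax (u - (N - 1)) ((v - (N-1))/2)).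
    assert (Hw1 : u - (N-1) <= w) by apply Rmax_l.
    assert (Hw2 : (v - (N-1))/2 <= w) by apply Rmax_r.
    assert (Hw3 : w < v - (N-1)). { unfold w. apply Rmax_lub_lt; lra. }
    destruct (dens01 w (v - (N-1))) as [p [Pp' Hp]]; try lra.
    exists (p + IZR (up u - 1)). split.
    apply Pshift; auto. rewrite minus_IZR. fold N. simpl (IZR 1). lra.
Qed.

Lemma gid x : g x = x.
Proof. destruct (Rtotal_order (g x) x) as [Hl|[He|Hg]]; auto; exfalso.
  - destruct (dens (g x) x Hl) as [p [Pp' Hp]].
    assert (g p < g x) by (apply gSI; lra). unfold P in Pp'. lra.
  - destruct (dens x (g x) Hg) as [p [Pp' Hp]].
    assert (g x < g p) by (apply gSI; lra). unfold P in Pp'. lra.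
Qed.
End Main2.

Theorem mainTheorem7 :
  forall g : R -> R, G0 g ->
    (forall h : R -> R, G0 h -> forall t : R, g (h t) = h (g t)) ->
    forall t : R, g t = t.
Proof.
  intros g Hg Hc t. apply gid.
  - apply G0_SI; auto.
  - intro s. apply (Hc gen_a G0_a).
  - intro s. apply (Hc gen_b G0_b).
  - intro s. apply (Hc gen_c G0_c).
Qed.
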